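(* Let $2\le N\le L-1$, let $x>0$, and let $r_1,\dots,r_{L-N},\ell_1,\dots,\ell_{L-N}$ be real parameters. Define $r,\ell:\{0,1,\dots,L-N\}^2\to\mathbb{R}$ (on pairs $(k,n)$ with $k+n\le L-N$) by $r(0,n)=\ell(0,n)=0$ for $n\ge 0$; $r(k,0)=r_k$, $\ell(k,0)=\ell_k$ for $k\ge 1$; $r(1,n)=x\,r_{n+1}$, $\ell(1,n)=x\,\ell_{n+1}$ for $n\ge1$; and for $k\ge 2$, $n\ge 1$, $$r(k,n)=x\,r_{n+k}+\sum_{j=n+1}^{n+k-1} r_j-\sum_{j=1}^{k-1} r_j,\qquad \ell(k,n)=x\,\ell_{n+k}+\sum_{j=n+1}^{n+k-1} \ell_j-\sum_{j=1}^{k-1} \ell_j .$$ Assume all these values are nonnegative. Consider the exclusion process on $\Omega_{L,N}$ in which, independently, particle $i$ jumps one site to the right at rate $r(h_i,h_{i-1})$ and one site to the left at rate $\ell(h_{i-1},h_i)$. Then the probability measure $$\hat\pi(\boldsymbol\eta)=\frac{1}{Z}\,x^{\sum_{j\in\mathbb{T}_L}\eta_j\eta_{j+1}},\qquad \boldsymbol\eta\in\Omega_{L,N},$$ with $Z$ the normalizing constant, is an invariant (stationary) measure of this process.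
   Context: $\mathbb{T}_L=\mathbb{Z}/L\mathbb{Z}$ is the ring with $L$ sites. $\Omega_{L,N}$ is the set of configurations $\boldsymbol\eta=(\eta_j)_{j\in\mathbb{T}_L}\in\{0,1\}^{\mathbb{T}_L}$ with $\sum_j\eta_j=N$ ($\eta_j=1$ means site $j$ is occupied by a particle). Particles are labeled $1,\dots,N$ in cyclic (increasing) order, with positions $p_1,\dots,p_N$, labels taken mod $N$. The headway $h_i$ is the number of empty sites between particle $i$ and particle $i+1$ (so $h_i\ge0$ and $\sum_i h_i=L-N$); $h_{i-1}$ is the number of empty sites between particle $i-1$ and particle $i$. A right jump of particle $i$ moves it from $p_i$ to $p_i+1$ (possible only if $h_i\ge1$), a left jump moves it to $p_i-1$ (possible only if $h_{i-1}\ge1$); the process is the continuous-time Markov chain with these jumps. Note $\sum_j\eta_j\eta_{j+1}=\#\{i: h_i=0\}$. *)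

(* Defs.v *)
From mathcomp Require Import all_boot all_order all_algebra.
Set Implicit Arguments. Unset Strict Implicit. Unset Printing Implicit Defensive.
Import Order.TTheory GRing.Theory Num.Theory.
Local Open Scope ring_scope.

(* Configurations: eta : {ffun 'I_L -> bool}, eta j = true iff site j occupied. *)
Definition config (L : nat) := {ffun 'I_L -> bool}.

Definition npart L (eta : config L) : nat := (\sum_(j < L) (eta j : nat))%N.

Definition Omega L N : {set config L} := [set eta | npart eta == N].

Definition shiftR L (j : 'I_L) (m : nat) : 'I_L := iter m (@ordS L) j.
Definition shiftL L (j : 'I_L) (m : nat) : 'I_L := iter m (@ord_pred L) j.

(* headway to the right of site p: number of consecutive empty sites p+1, p+2, ... *)
Definition hR L (eta : config L) (p : 'I_L) : nat :=
  (\sum_(1 <= k < L) [forall m : 'I_k, ~~ eta (shiftR p m.+1)] : nat)%N.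
Definition hL L (eta : config L) (p : 'I_L) : nat :=
  (\sum_(1 <= k < L) [forall m : 'I_k, ~~ eta (shiftL p m.+1)] : nat)%N.

Definition nn L (eta : config L) : nat :=
  (\sum_(j < L) (eta j && eta (shiftR j 1)) : nat)%N.

Definition ratefun {R : nzRingType} (x : R) (rr : nat -> R) (k n : nat) : R :=
  if k == 0%N then 0
  else if n == 0%N then rr k
  else if k == 1%N then x * rr (n + 1)%N
  else x * rr (n + k)%N + \sum_(n.+1 <= j < n + k) rr j - \sum_(1 <= j < k) rr j.

Definition moveR L (eta : config L) (p : 'I_L) : config L :=
  [ffun i => if i == p then false else if i == shiftR p 1 then true else eta i].
Definition moveL L (eta : config L) (p : 'I_L) : config L :=
  [ffun i => if i == p then false else if i == shiftL p 1 then true else eta i].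

(* transition rate from eta to eta': particle at p jumps right at rate
   r(h_i, h_{i-1}) = r(hR p, hL p), left at rate l(h_{i-1}, h_i) = l(hL p, hR p). *)
Definition Qrate {R : nzRingType} L (x : R) (rr ll : nat -> R) (eta eta' : config L) : R :=
  \sum_(p < L)
    ( ((eta p && ~~ eta (shiftR p 1)) && (eta' == moveR eta p))%:R
        * ratefun x rr (hR eta p) (hL eta p)
    + ((eta p && ~~ eta (shiftL p 1)) && (eta' == moveL eta p))%:R
        * ratefun x ll (hL eta p) (hR eta p) ).

Definition Zconst {R : fieldType} (L : nat) (N : nat) (x : R) : R :=
  \sum_(eta in Omega L N) x ^+ nn eta.
Definition pihat {R : fieldType} (L N : nat) (x : R) (eta : config L) : R :=
  x ^+ nn eta / Zconst L N x.

Definition ep_invariant {R : nzRingType} L N (mu : config L -> R)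
    (Q : config L -> config L -> R) : Prop :=
  forall eta' : config L, eta' \in Omega L N ->
    \sum_(eta in Omega L N) mu eta * Q eta eta'
    = mu eta' * \sum_(eta in Omega L N) Q eta' eta.

Arguments Zconst {R} L N x.
Arguments pihat {R} L N x eta.
Arguments Qrate {R} L x rr ll eta eta'.
Arguments ep_invariant {R} L N mu Q.

(* Main.v *)
Require Import Defs.
From mathcomp Require Import all_boot all_order all_algebra.
From mathcomp Require Import zify ring lra.
Set Implicit Arguments. Unset Strict Implicit. Unset Printing Implicit Defensive.
Import Order.TTheory GRing.Theory Num.Theory.

Definition dir L (s t : 'I_L -> 'I_L) :=
  [/\ cancel s t, cancel t s, (forall p, iter L s p = p),
      (forall p m, 0 < m < L -> iter m s p != p) &
      (forall p j, exists2 m, m < L & iter m s p = j)].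

Lemma iterK L (s t : 'I_L -> 'I_L) : cancel s t ->
  forall m k p, iter m t (iter (m + k) s p) = iter k s p.
Proof.
move=> st; elim=> [|m IH] k p //.
by rewrite iterSr addSn iterS st IH.
Qed.

Lemma dir_sym L s t : @dir L s t -> dir t s.
Proof.
case=> st ts cyc ne su; split=> //.
- move=> p; have := iterK ts L 0 p.
  by rewrite addn0 /= cyc.
- move=> p m Hm; apply/eqP => E.
  have := iterK ts m 0 p; rewrite addn0 /= E => E2.
  by move: (ne p m Hm); rewrite E2 eqxx.
- move=> p j; have [m Hm E] := su j p.
  by exists m => //; rewrite -E; have := iterK st m 0 j; rewrite addn0.
Qed.

Definition hd L (s : 'I_L -> 'I_L) (e : config L) (p : 'I_L) : nat :=
  (\sum_(1 <= k < L) [forall m : 'I_k, ~~ e (iter m.+1 s p)] : nat)%N.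
Definition mv L (s : 'I_L -> 'I_L) (e : config L) (p : 'I_L) : config L :=
  [ffun i => if i == p then false else if i == s p then true else e i].
Definition nnd L (s : 'I_L -> 'I_L) (e : config L) : nat :=
  (\sum_(j < L) (e j && e (s j)) : nat)%N.

Section Dir.
Variables (L : nat) (s t : 'I_L -> 'I_L).
Hypothesis D : dir s t.

Lemma iter_inj p m n : m < L -> n < L -> iter m s p = iter n s p -> m = n.
Proof.
case: D => st ts cyc ne su.
wlog lt: m n / m <= n => [W|] Hm Hn E.
  by case: (leqP m n) => H; [apply: W | symmetry; apply: W] => //; apply: ltnW.
case: (ltngtP m n) lt => // H _.
have := ne (iter m s p) (n - m); rewrite -iterD subnK ?(ltnW H) // -E eqxx.
by rewrite subn_gt0 H /=; move/(_ (leq_ltn_trans (leq_subr _ _) Hn)).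
Qed.

Lemma hd_spec (e : config L) p h : h < L ->
  (forall m, 0 < m <= h -> ~~ e (iter m s p)) -> e (iter h.+1 s p) ->
  hd s e p = h.
Proof.
move=> hL Hm Hh; rewrite /hd.
rewrite (eq_big_nat _ _ (F2 := fun k => (k <= h : nat))); last first.
  move=> k /andP [k1 kL]; congr nat_of_bool.
  case: (leqP k h) => kh.
    by apply/forallP => m; apply: Hm; rewrite ltn0Sn /= (leq_trans (ltn_ord m)).
  by apply/forallP => /(_ (Ordinal kh)) /=; rewrite Hh.
rewrite (big_cat_nat _ (n := h.+1)) //=.
have -> : (\sum_(h.+1 <= i < L) (i <= h : nat) = 0)%N.
  rewrite big_nat_cond big1 // => i /andP [/andP [hi _] _].
  by rewrite leqNgt hi.
rewrite addn0 (eq_big_nat _ _ (F2 := fun _ => 1%N)); last first.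
  by move=> i /andP [_ hi]; rewrite -ltnS hi.
by rewrite sum_nat_const_nat subn1 muln1.
Qed.


Lemma hd_props (e : config L) p : e p ->
  [/\ hd s e p < L, (forall m, 0 < m <= hd s e p -> ~~ e (iter m s p))
    & e (iter (hd s e p).+1 s p)].
Proof.
case: D => st ts cyc ne su Ep.
have L0 : 0 < L by apply: leq_ltn_trans (ltn_ord p).
have ex : exists n, e (iter n.+1 s p) by exists L.-1; rewrite prednK // cyc.
case: (ex_minnP ex) => h Hh Hmin.
have hL : h < L.
  by rewrite -(prednK L0) ltnS Hmin // prednK // cyc.
have Hm : forall m, 0 < m <= h -> ~~ e (iter m s p).
  move=> [|m] // /andP [_ mh]; apply/negP => Em.
  by have := Hmin m Em; rewrite leqNgt mh.
by rewrite (hd_spec hL Hm Hh).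
Qed.

Lemma hd_lt (e : config L) q j : e q -> e j -> j != q -> hd s e q < L.-1.
Proof.
move=> Eq Ej jq; have [hL Hm Hh] := hd_props Eq.
case: D => st ts cyc ne su.
have [m mL Em] := su q j.
have m0 : 0 < m by case: m Em {mL} => // E; rewrite -E eqxx in jq.
rewrite ltnNge; apply/negP => H.
have := Hm m; rewrite m0 /= (leq_trans _ H) ?Em ?Ej //.
  by move/(_ isT).
by rewrite -ltnS prednK // (leq_ltn_trans _ mL).
Qed.

End Dir.

Lemma phi_prop L (s t : 'I_L -> 'I_L) (D : dir s t) (e : config L) q : e q ->
  [/\ e (iter (hd s e q).+1 s q), hd t e (iter (hd s e q).+1 s q) = hd s e q
    & iter (hd s e q).+1 t (iter (hd s e q).+1 s q) = q].
Proof.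
move=> Eq; have [hL Hm Hh] := hd_props D Eq.
have st : cancel s t by case: D.
set b := hd s e q in hL Hm Hh *.
have K : iter b.+1 t (iter b.+1 s q) = q.
  by have := iterK st b.+1 0 q; rewrite addn0.
split=> //; apply: hd_spec => //; last by rewrite K.
move=> m /andP [m0 mb].
have E : iter m t (iter b.+1 s q) = iter (b.+1 - m) s q.
  by rewrite -{1}(subnKC (leq_trans mb (leqnSn b))) iterK.
rewrite E; apply: Hm; rewrite subn_gt0 ltnS mb /=.
by rewrite leq_subLR -add1n leq_add2r.
Qed.

Local Open Scope ring_scope.

Lemma telesc (R : nzRingType) L (s t : 'I_L -> 'I_L) (D : dir s t) (e : config L)
  (G : nat -> R) :
  \sum_(q | e q) G (hd t e q) = \sum_(q | e q) G (hd s e q).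
Proof.
pose phi q := iter (hd s e q).+1 s q.
pose psi q := iter (hd t e q).+1 t q.
rewrite (reindex_onto phi psi); last first.
  by move=> i Ei; have [_ H1 H2] := phi_prop (dir_sym D) Ei; rewrite /phi /psi H1.
apply: eq_big => j.
  apply/idP/idP.
    move=> /andP [Ep /eqP E]; have [+ _ _] := phi_prop (dir_sym D) Ep.
    by rewrite -/(psi _) E.
  by move=> Ej; have [-> H1 K] := phi_prop D Ej; rewrite /psi /phi H1 K eqxx.
move=> /andP [Ep /eqP E].
have Ej : e j by have [+ _ _] := phi_prop (dir_sym D) Ep; rewrite -/(psi _) E.
by have [_ H1 _] := phi_prop D Ej; rewrite /phi H1.
Qed.
Local Close Scope ring_scope.

Lemma mv_equiv L (s t : 'I_L -> 'I_L) (D : dir s t) (e e' : config L) p :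
  ((e p && ~~ e (s p)) && (e' == mv s e p)) =
  ((e' (s p) && ~~ e' p) && (e == mv t e' (s p))).
Proof.
have [st ts _ _ _] := D.
apply/idP/idP => [/andP [/andP [Ep Esp] /eqP ->]|/andP [/andP [Esp Ep] /eqP ->]].
- have ne : s p != p by apply/eqP => E; rewrite E Ep in Esp.
  rewrite !ffunE eqxx (negbTE ne) eqxx /=.
  apply/eqP/ffunP => i; rewrite !ffunE st.
  case: (eqVneq i (s p)) => [->|nis]; first by rewrite (negbTE Esp).
  by case: (eqVneq i p) => [->|nip].
- have ne : p != s p by apply/eqP => E; rewrite -E (negbTE Ep) in Esp.
  rewrite !ffunE eqxx st (negbTE ne) eqxx /=.
  apply/eqP/ffunP => i; rewrite !ffunE st.
  case: (eqVneq i p) => [->|nip]; first by rewrite (negbTE Ep).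
  by case: (eqVneq i (s p)) => [->|nis].
Qed.

Lemma sum_swap L (f g : 'I_L -> nat) (r : seq 'I_L) : uniq r ->
  (forall j, j \notin r -> f j = g j) ->
  (\sum_j f j + \sum_(u <- r) g u = \sum_j g j + \sum_(u <- r) f u)%N.
Proof.
move=> ur H; rewrite (big_uniq _ ur) (big_uniq _ ur) [X in (X + _)%N](bigID (mem r)) [X in (_ = X + _)%N](bigID (mem r)) /=.
rewrite [X in (_ + X + _)%N](eq_bigr g) //.
set a := \sum_(i in r) f i; set b := \sum_(i in r) g i; lia.
Qed.

Lemma local L (s t : 'I_L -> 'I_L) (D : dir s t) (L3 : 2 < L) (e : config L) q j :
  e q -> ~~ e (t q) -> e j -> j != q ->
  [/\ 0 < hd t e q, hd s (mv t e q) (t q) = (hd s e q).+1,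
      hd t (mv t e q) (t q) = (hd t e q).-1
    & nnd s (mv t e q) + (hd s e q == 0) = nnd s e + (hd t e q == 1)].
Proof.
move=> Eq Etq Ej jq.
have [st ts cyc ne su] := D; have D' := dir_sym D.
have [aL Ha Ha1] := hd_props D' Eq.
have [bL Hb Hb1] := hd_props D Eq.
have aL2 := hd_lt D' Eq Ej jq; have bL2 := hd_lt D Eq Ej jq.
set a := hd t e q in aL Ha Ha1 aL2 *.
set b := hd s e q in bL Hb Hb1 bL2 *.
set e2 := mv t e q.
have e2E i : e2 i = if i == q then false else if i == t q then true else e i.
  by rewrite ffunE.
have L0 : 0 < L by lia.
have L1 : 1 < L by lia.
have a0 : 0 < a by case: a Ha1 {Ha aL aL2} => //=; rewrite (negbTE Etq).
have itq m : m < L -> (iter m t q == q) = (m == 0).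
  move=> mL; apply/eqP/eqP => [E|->] //; exact: (iter_inj D' mL L0 E).
have itq1 m : m < L -> (iter m t q == t q) = (m == 1).
  move=> mL; apply/eqP/eqP => [E|->] //; exact: (iter_inj D' mL L1 E).
have isq m : 0 < m < L -> (iter m s q == q) = false.
  by move=> H; apply/negbTE/ne.
have tqE : t q = iter L.-1 s q.
  have E : iter L s q = s (iter L.-1 s q) by rewrite -iterS prednK.
  by rewrite -{1}(cyc q) E st.
have isq1 m : m < L -> (iter m s q == t q) = (m == L.-1).
  move=> mL; rewrite tqE; apply/eqP/eqP => [|->] //.
  by apply: (iter_inj D); rewrite // prednK // (ltnW (ltnW L3)).
split => //.
- apply: hd_spec; first by lia.
    move=> [|m] // /andP [_ mb]; rewrite iterSr ts e2E.
    case: m mb => [|m] mb; first by rewrite eqxx.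
    rewrite isq; last lia. rewrite isq1; last lia.
    rewrite (_ : (m.+1 == L.-1) = false); last by apply/eqP; lia.
    by apply: Hb; lia.
  rewrite iterSr ts e2E isq; last lia. rewrite isq1; last lia.
  case: eqP => [E|_]; last exact: Hb1.
  move: Hb1; have /eqP -> : iter b.+1 s q == t q by rewrite isq1 ?E ?eqxx //; lia.
  by rewrite (negbTE Etq).
- apply: hd_spec; first by lia.
    move=> m /andP [m0 ma]; rewrite -iterSr e2E itq; last lia.
    rewrite itq1; last lia.
    rewrite (_ : (m.+1 == 0) = false) // (_ : (m.+1 == 1) = false); last by apply/eqP; lia.
    by apply: Ha; lia.
  rewrite -iterSr prednK // e2E itq; last lia. rewrite itq1; last lia.
  rewrite (_ : (a.+1 == 1) = false); last by apply/eqP; lia.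
  exact: Ha1.
- have n1 : (t q == q) = false by have := itq 1 L1.
  have n2 : (t (t q) == q) = false by have := itq 2 L3.
  have n3 : (t (t q) == t q) = false by have := itq1 2 L3.
  have U : uniq [:: q; t q; t (t q)].
    by rewrite /= !inE ![q == _]eq_sym n1 n2 eq_sym n3.
  have H : forall i, i \notin [:: q; t q; t (t q)] ->
      (e2 i && e2 (s i) : nat) = (e i && e (s i) : nat).
    move=> i; rewrite !inE !negb_or => /and3P [iq itq' ittq].
    have siq : (s i == q) = false.
      by apply/negbTE; apply: contra itq' => /eqP <-; rewrite st.
    have sitq : (s i == t q) = false.
      by apply/negbTE; apply: contra ittq => /eqP <-; rewrite st.
    by rewrite !e2E (negbTE iq) (negbTE itq') siq sitq.
  have := sum_swap U H; rewrite !big_cons big_nil.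
  have -> : (e2 q && e2 (s q)) = false by rewrite e2E eqxx.
  have -> : (e2 (t q) && e2 (s (t q))) = false by rewrite ts !e2E eqxx n1 eqxx.
  have -> : (e2 (t (t q)) && e2 (s (t (t q)))) = e (t (t q)) by rewrite ts !e2E n2 n3 n1 eqxx andbT.
  have -> : (e q && e (s q)) = e (s q) by rewrite Eq.
  have -> : (e (t q) && e (s (t q))) = false by rewrite (negbTE Etq).
  have -> : (e (t (t q)) && e (s (t (t q)))) = false by rewrite ts (negbTE Etq) andbF.
  have -> : (b == 0) = e (s q).
    apply/idP/idP => [/eqP b0|H0]; first by move: Hb1; rewrite b0.
    by apply/eqP; apply: hd_spec => // -[].
  have -> : (a == 1) = e (t (t q)).
    apply/idP/idP => [/eqP a1|H0]; first by move: Ha1; rewrite a1.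
    apply/eqP; case: (ltngtP a 1) => // a2; first by move: a0 a2; clear; lia.
    by have := Ha 2; rewrite /= H0; move/(_ a2).
  rewrite big_nil /nnd /=; lia.
Qed.
Local Open Scope ring_scope.
Definition gg (R : nzRingType) (rr : nat -> R) (a : nat) : R :=
  if a == 0%N then 0 else rr a.

Lemma rate0 (R : nzRingType) (x : R) rr b : ratefun x rr b 0 = gg rr b.
Proof. by rewrite /ratefun /gg; case: b. Qed.

Lemma rate_alg (R : comNzRingType) (x : R) rr a b : (0 < a)%N ->
  x ^+ (a == 1%N) * ratefun x rr b.+1 a.-1
  = x ^+ (b == 0%N) * (ratefun x rr b a + gg rr a - gg rr b).
Proof.
have E1 : x ^+ true = x := expr1 x.
have E0 : x ^+ false = 1 := expr0 x.
case: a => // -[|a] _ /=.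
- case: b => [|[|b]]; rewrite /ratefun /gg /= ?E1 ?E0.
  + by rewrite subr0 add0r.
  + by rewrite mul1r addrK.
  + rewrite add1n big_nat_recr //= [\sum_(1 <= j < b.+2) _]big_ltn //=.
    rewrite mul1r. set S := \sum_(2 <= j < b.+2) rr j. ring.
- case: b => [|[|b]]; rewrite /ratefun /gg /= ?E1 ?E0.
  + by rewrite addn1 subr0 add0r mul1r mulrC.
  + rewrite addn2 big_nat1 big_nat1 addn1. ring.
  + rewrite big_ltn; last lia.
    rewrite [\sum_(1 <= j < b.+3) _]big_nat_recr //=.
    have -> : (a.+1 + b.+3 = a.+2 + b.+2)%N by lia.
    set S := \sum_(a.+3 <= j < a.+2 + b.+2) rr j.
    set T := \sum_(1 <= j < b.+2) rr j. ring.
Qed.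

Lemma sum_ind (R : nzRingType) L (e : config L) (G : nat -> R) (h : 'I_L -> nat) :
  \sum_q (e q)%:R * G (h q) = \sum_(q | e q) G (h q).
Proof. by rewrite [RHS]big_mkcond; apply: eq_bigr => q _; case: (e q); rewrite ?mul1r ?mul0r. Qed.

Lemma halfgen (R : fieldType) L (s t : 'I_L -> 'I_L) (D : dir s t) (L3 : (2 < L)%N)
  (e : config L) (x : R) rr :
  x != 0 -> (forall q, e q -> exists2 j, e j & j != q) ->
  \sum_q ((e q && ~~ e (t q))%:R * x ^+ nnd s (mv t e q)
           * ratefun x rr (hd s (mv t e q) (t q)) (hd t (mv t e q) (t q)))
  = x ^+ nnd s e * \sum_q ((e q && ~~ e (s q))%:R * ratefun x rr (hd s e q) (hd t e q)).
Proof.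
move=> x0 two.
have L0 : (0 < L)%N by lia.
transitivity (\sum_q x ^+ nnd s e * ((e q)%:R * (ratefun x rr (hd s e q) (hd t e q)
               + gg rr (hd t e q) - gg rr (hd s e q)))).
  apply: eq_bigr => q _.
  case Eq: (e q); last by rewrite /= !mul0r mulr0.
  case Etq: (e (t q)).
    have -> : hd t e q = 0%N by apply: hd_spec => // -[].
    by rewrite /= rate0 /gg /= addr0 subrr !mulr0 !mul0r.
  have [j Ej jq] := two q Eq.
  have [a0 Hb Ha Hn] := local D L3 Eq (negbT Etq) Ej jq.
  rewrite /= Hb Ha !mul1r.
  have RA := rate_alg x rr (hd s e q) a0.
  set xa := x ^+ (hd t e q == 1%N) in RA.
  set xb := x ^+ (hd s e q == 0%N) in RA.
  have E : x ^+ nnd s (mv t e q) * xb = x ^+ nnd s e * xa by rewrite -!exprD Hn.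
  apply: (mulIf (expf_neq0 (hd s e q == 0%N) x0)); rewrite -/xb.
  by rewrite mulrAC E -mulrA RA [RHS]mulrAC mulrA.
rewrite -mulr_sumr; congr (_ * _).
rewrite (eq_bigr (fun q => (e q && ~~ e (s q))%:R * ratefun x rr (hd s e q) (hd t e q)
   + ((e q)%:R * gg rr (hd t e q) - (e q)%:R * gg rr (hd s e q)))); last first.
  move=> q _; case Eq: (e q); last by rewrite /= !mul0r subrr addr0.
  case Esq: (e (s q)) => /=; last by rewrite !mul1r addrA.
  have -> : hd s e q = 0%N by apply: hd_spec => // -[].
  by rewrite {1}/ratefun eqxx !mul1r mul0r !add0r.
rewrite big_split /= sumrB !sum_ind (telesc D e (gg rr)).
by rewrite subrr addr0.
Qed.

Lemma iter_ordS L m (p : 'I_L) : val (iter m (@ordS L) p) = ((p + m) %% L)%N.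
Proof.
elim: m => [|m IH] /=; first by rewrite addn0 modn_small.
by rewrite IH -addn1 modnDml -addnA addn1.
Qed.

Lemma dir_ordS L : dir (@ordS L) (@ord_pred L).
Proof.
split.
- exact: ordSK.
- exact: ord_predK.
- by move=> p; apply: val_inj; rewrite iter_ordS modnDr modn_small.
- move=> p m /andP [m0 mL]; apply/eqP => E; have := congr1 (@nat_of_ord L) E; rewrite iter_ordS.
  have pL := ltn_ord p.
  case: (ltnP (p + m) L) => H.
    by rewrite modn_small //; lia.
  have -> : (p + m = (p + m - L) + L)%N by lia.
  by rewrite modnDr modn_small; lia.
- move=> p j; exists (((j + L) - p) %% L)%N; first by rewrite ltn_mod; have := ltn_ord p; lia.
  apply: val_inj; rewrite iter_ordS modnDmr.
  have -> : (p + (j + L - p) = j + L)%N by have := ltn_ord p; lia.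
  by rewrite modnDr modn_small.
Qed.

Lemma nnd_sym L (s t : 'I_L -> 'I_L) (D : dir s t) (e : config L) : nnd t e = nnd s e.
Proof.
have [st ts _ _ _] := D.
rewrite /nnd (reindex_inj (can_inj st)) /=.
by apply: eq_bigr => j _; rewrite st andbC.
Qed.

Lemma npart_mv L (s t : 'I_L -> 'I_L) (D : dir s t) (e : config L) q :
  e q -> ~~ e (t q) -> npart (mv t e q) = npart e.
Proof.
move=> Eq Etq.
have tq : (t q == q) = false.
  by apply/negbTE; apply: contra Etq => /eqP ->.
have U : uniq [:: q; t q] by rewrite /= inE eq_sym tq.
have H : forall j, j \notin [:: q; t q] -> (mv t e q j : nat) = (e j : nat).
  by move=> j; rewrite !inE negb_or => /andP [/negbTE jq /negbTE jtq]; rewrite ffunE jq jtq.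
have := sum_swap U H; rewrite !big_cons !big_nil !ffunE eqxx tq eqxx Eq (negbTE Etq).
rewrite /npart /=; lia.
Qed.

Lemma two_part L (e : config L) q : (2 <= npart e)%N -> e q -> exists2 j, e j & j != q.
Proof.
move=> H2 Eq; case: (boolP [exists j, e j && (j != q)]) => [/existsP [j /andP [Ej jq]]|].
  by exists j.
rewrite negb_exists => /forallP Hn; exfalso; move: H2.
rewrite /npart (bigD1 q) //= Eq big1 //.
by move=> j jq; have := Hn j; rewrite jq andbT => /negbTE ->.
Qed.

Local Open Scope ring_scope.

Lemma collapse (R : nzRingType) L (S : {set config L}) (m : config L) (c : bool)
   (F : config L -> R) :
  (c -> m \in S) -> \sum_(e in S) (c && (e == m))%:R * F e = c%:R * F m.
Proof.
case: c => /= [/(_ isT) mS|_]; last by rewrite mul0r big1 // => e _; rewrite mul0r.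
rewrite (bigD1 m) //= eqxx mul1r big1 ?addr0 //.
by move=> e /andP [_ /negbTE ->]; rewrite mul0r.
Qed.

Lemma collapse2 (R : comNzRingType) L (S : {set config L}) (m : config L) (c : bool)
   (G F : config L -> R) :
  (c -> m \in S) -> \sum_(e in S) G e * ((c && (e == m))%:R * F e) = c%:R * (G m * F m).
Proof.
move=> H; rewrite -(@collapse R L S m c (fun e => G e * F e)) //.
by apply: eq_bigr => e _; rewrite mulrCA.
Qed.

Lemma equivR L (e e' : config L) p :
  ((e p && ~~ e (shiftR p 1)) && (e' == moveR e p)) =
  ((e' (shiftR p 1) && ~~ e' p) && (e == moveL e' (shiftR p 1))).
Proof. exact: (mv_equiv (@dir_ordS L)). Qed.

Lemma equivL L (e e' : config L) p :
  ((e p && ~~ e (shiftL p 1)) && (e' == moveL e p)) =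
  ((e' (shiftL p 1) && ~~ e' p) && (e == moveR e' (shiftL p 1))).
Proof. exact: (mv_equiv (dir_sym (@dir_ordS L))). Qed.

Lemma halfR (R : fieldType) L (L3 : (2 < L)%N) (e : config L) (x : R) rr :
  x != 0 -> (forall q, e q -> exists2 j, e j & j != q) ->
  \sum_q ((e q && ~~ e (shiftL q 1))%:R * x ^+ nn (moveL e q)
     * ratefun x rr (hR (moveL e q) (shiftL q 1)) (hL (moveL e q) (shiftL q 1)))
  = x ^+ nn e * \sum_q ((e q && ~~ e (shiftR q 1))%:R * ratefun x rr (hR e q) (hL e q)).
Proof. move=> x0 two; have := halfgen (@dir_ordS L) L3 rr x0 two. move=> H. exact H. Qed.

Lemma halfL (R : fieldType) L (L3 : (2 < L)%N) (e : config L) (x : R) rr :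
  x != 0 -> (forall q, e q -> exists2 j, e j & j != q) ->
  \sum_q ((e q && ~~ e (shiftR q 1))%:R * x ^+ nn (moveR e q)
     * ratefun x rr (hL (moveR e q) (shiftR q 1)) (hR (moveR e q) (shiftR q 1)))
  = x ^+ nn e * \sum_q ((e q && ~~ e (shiftL q 1))%:R * ratefun x rr (hL e q) (hR e q)).
Proof.
move=> x0 two; have D := dir_sym (@dir_ordS L).
have H := halfgen D L3 rr x0 two.
have E : nn e = nnd (@ord_pred L) e by exact: (nnd_sym D e).
rewrite E -H; apply: eq_bigr => q _.
by rewrite -(nnd_sym D (mv (@ordS L) e q)).
Qed.

Unset Implicit Arguments.
Theorem theorem1 (R : realFieldType) (L N : nat) (x : R) (rr ll : nat -> R) :
  (2 <= N)%N -> (N <= L - 1)%N -> 0 < x ->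
  (forall k n : nat, (k + n <= L - N)%N ->
     0 <= ratefun x rr k n /\ 0 <= ratefun x ll k n) ->
  ep_invariant L N (pihat L N x) (Qrate L x rr ll).
Proof.
move=> N2 NL x0 _ e' He'.
have L3 : (2 < L)%N by lia.
have xn0 : x != 0 by rewrite gt_eqF.
have He'N : npart e' = N by move: He'; rewrite inE => /eqP.
have two : forall q, e' q -> exists2 j, e' j & j != q.
  by move=> q Eq; apply: two_part => //; rewrite He'N.
rewrite /pihat.
set Z := Zconst L N x.
rewrite (eq_bigr (fun e => Z^-1 * (x ^+ nn e * Qrate L x rr ll e e'))); last first.
  by move=> e _; rewrite mulrAC mulrC.
rewrite -mulr_sumr [RHS]mulrAC [RHS]mulrC; congr (_ * _).
rewrite /Qrate [in RHS]exchange_big /=.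
rewrite (eq_bigr (fun p => (e' p && ~~ e' (shiftR p 1))%:R * ratefun x rr (hR e' p) (hL e' p)
   + (e' p && ~~ e' (shiftL p 1))%:R * ratefun x ll (hL e' p) (hR e' p))); last first.
  move=> p _; rewrite big_split /= !collapse //.
    move=> /andP [Ep Esp]; rewrite inE -He'N; apply/eqP.
    exact: (npart_mv (@dir_ordS L) Ep Esp).
  move=> /andP [Ep Esp]; rewrite inE -He'N; apply/eqP.
  exact: (npart_mv (dir_sym (@dir_ordS L)) Ep Esp).
under eq_bigr do rewrite mulr_sumr.
rewrite exchange_big /=.
rewrite (eq_bigr (fun p =>
   (e' (shiftR p 1) && ~~ e' p)%:R * (x ^+ nn (moveL e' (shiftR p 1)) *
       ratefun x rr (hR (moveL e' (shiftR p 1)) p) (hL (moveL e' (shiftR p 1)) p))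
 + (e' (shiftL p 1) && ~~ e' p)%:R * (x ^+ nn (moveR e' (shiftL p 1)) *
       ratefun x ll (hL (moveR e' (shiftL p 1)) p) (hR (moveR e' (shiftL p 1)) p)))); last first.
  move=> p _.
  rewrite (eq_bigr (fun e =>
     x ^+ nn e * (((e' (shiftR p 1) && ~~ e' p) && (e == moveL e' (shiftR p 1)))%:R
                  * ratefun x rr (hR e p) (hL e p))
   + x ^+ nn e * (((e' (shiftL p 1) && ~~ e' p) && (e == moveR e' (shiftL p 1)))%:R
                  * ratefun x ll (hL e p) (hR e p)))); last first.
    by move=> e _; rewrite mulrDr equivR equivL.
  rewrite big_split /= !collapse2 //.
  - move=> /andP [Ep Esp]; rewrite inE -He'N; apply/eqP.
    have Esp' : ~~ e' (ordS (ord_pred p)) by rewrite ord_predK.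
    exact: (npart_mv (dir_sym (@dir_ordS L)) Ep Esp').
  - move=> /andP [Ep Esp]; rewrite inE -He'N; apply/eqP.
    have Esp' : ~~ e' (ord_pred (ordS p)) by rewrite ordSK.
    exact: (npart_mv (@dir_ordS L) Ep Esp').
rewrite big_split /= [in RHS]big_split mulrDr; congr (_ + _).
- rewrite (reindex_inj (@ord_pred_inj L)) /= -(halfR L3 rr xn0 two).
  apply: eq_bigr => q _.
  by rewrite ord_predK mulrA.
- rewrite (reindex_inj (@ordS_inj L)) /= -(halfL L3 ll xn0 two).
  apply: eq_bigr => q _.

  by rewrite ordSK mulrA.
Qed.
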